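(* Let $p_n$ be the number of trees $t\in\mathcal{T}_n$ with $\gamma(t)\le 2$ (equivalently, trees having no subtree that is a caterpillar with 3 leaves, a ''pitchfork''); $p_n$ is the coefficient of $x^n$ in $\frac{1-\sqrt{1-4x+8x^3}}{2}$. Then, with $R=\frac14(\sqrt5-1)$, $$\lim_{n\to\infty}\frac{\frac14\sqrt{\frac{4R-24R^3}{\pi n^3}}\left(\frac1R\right)^n}{p_n}=1.$$
   Context: $\mathcal{T}_n$ is the set of ordered rooted binary trees (every internal node has exactly two ordered children) with $n$ leaves. A tree is a caterpillar if every node is either a leaf or has at least one leaf among its direct children. The subtree of $t$ at a node $v$ consists of $v$ and all its descendants, and $\gamma(t)$ is the largest number of leaves of a caterpillar occurring as the subtree of $t$ at some node. *)

(* Defs.v *)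
From Stdlib Require Import Reals List Arith.
Import ListNotations.

Inductive tree : Type :=
| Leaf : tree
| Node : tree -> tree -> tree.

Fixpoint leaves (t : tree) : nat :=
  match t with
  | Leaf => 1
  | Node l r => leaves l + leaves r
  end.

Definition is_leaf (t : tree) : bool :=
  match t with Leaf => true | Node _ _ => false end.

Fixpoint is_caterpillar (t : tree) : bool :=
  match t with
  | Leaf => true
  | Node l r => (is_leaf l || is_leaf r) && is_caterpillar l && is_caterpillar r
  end.

Fixpoint subtrees (t : tree) : list tree :=
  match t with
  | Leaf => [Leaf]
  | Node l r => t :: (subtrees l ++ subtrees r)
  end.

Definition gamma (t : tree) : nat :=
  list_max (map leaves (filter is_caterpillar (subtrees t))).

Definition counts_pitchfork_free (n c : nat) : Prop :=
  exists l : list tree,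
    NoDup l /\ length l = c /\
    (forall t, In t l <-> (leaves t = n /\ gamma t <= 2)).

(* Main.v *)
Require Import Defs.
From Stdlib Require Import Reals Lra Lia List Arith.
Import ListNotations.

Fixpoint pfb (t : tree) : bool :=
  match t with
  | Leaf => true
  | Node l r => pfb l && pfb r && negb (Nat.eqb (leaves l + leaves r) 3)
  end.

Lemma leaves_pos t : 1 <= leaves t.
Proof. induction t; simpl; lia. Qed.

Lemma list_max_cons a l : list_max (a :: l) = Nat.max a (list_max l).
Proof. reflexivity. Qed.

Lemma gamma_node l r : gamma (Node l r) =
  Nat.max (if is_caterpillar (Node l r) then leaves l + leaves r else 0)
          (Nat.max (gamma l) (gamma r)).
Proof.
  unfold gamma. cbn [subtrees filter].
  rewrite filter_app.
  destruct (is_caterpillar (Node l r)) eqn:E;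
  [rewrite map_cons, list_max_cons|]; rewrite map_app, list_max_app; simpl; lia.
Qed.

Lemma gamma_cat t : is_caterpillar t = true -> leaves t <= gamma t.
Proof.
  intros H. destruct t as [|l r].
  - unfold gamma. simpl. lia.
  - rewrite gamma_node, H. simpl. lia.
Qed.

Lemma leaves1 t : leaves t = 1 -> t = Leaf.
Proof. destruct t; simpl; auto. intros; pose proof (leaves_pos t1); pose proof (leaves_pos t2); lia. Qed.

Lemma leaves2 t : leaves t = 2 -> t = Node Leaf Leaf.
Proof.
  destruct t as [|l r]; simpl; [lia|]. intros H.
  pose proof (leaves_pos l); pose proof (leaves_pos r).
  rewrite (leaves1 l), (leaves1 r); auto; lia.
Qed.

Lemma gamma_le_leaves t : leaves t <= 2 -> True.
Proof. auto. Qed.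

Lemma pfb_spec t : gamma t <= 2 <-> pfb t = true.
Proof.
  induction t as [|l IHl r IHr].
  - unfold gamma; simpl. split; auto.
  - rewrite gamma_node. simpl pfb.
    rewrite !Bool.andb_true_iff, Bool.negb_true_iff, Nat.eqb_neq, <- IHl, <- IHr.
    split.
    + intros H. assert (Hl: gamma l <= 2) by lia. assert (Hr: gamma r <= 2) by lia.
      repeat split; auto. intros E.
      assert (is_caterpillar (Node l r) = true).
      { pose proof (leaves_pos l); pose proof (leaves_pos r).
        assert (leaves l = 1 /\ leaves r = 2 \/ leaves l = 2 /\ leaves r = 1) as [[A B]|[A B]] by lia.
        - rewrite (leaves1 l A), (leaves2 r B). reflexivity.
        - rewrite (leaves2 l A), (leaves1 r B). reflexivity. }
      rewrite H0 in H. lia.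
    + intros [[Hl Hr] H3].
      destruct (is_caterpillar (Node l r)) eqn:C; [|lia].
      simpl in C. rewrite !Bool.andb_true_iff, Bool.orb_true_iff in C.
      destruct C as [[[A|A] Cl] Cr].
      * destruct l; [|discriminate]. cbn [leaves] in *.
        pose proof (gamma_cat r Cr). pose proof (leaves_pos r). assert (gamma Leaf = 1) by reflexivity. lia.
      * destruct r; [|discriminate]. cbn [leaves] in *.
        pose proof (gamma_cat l Cl). pose proof (leaves_pos l). assert (gamma Leaf = 1) by reflexivity. lia.
Qed.

Fixpoint E (f n : nat) : list tree :=
  match f with
  | 0 => []
  | S f' =>
    if Nat.eqb n 1 then [Leaf]
    else if Nat.eqb n 3 then []
    else flat_map (fun k => flat_map (fun l => map (fun r => Node l r) (E f' (n - k))) (E f' k))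
                  (seq 0 (S n))
  end.

Lemma E_sound f n t : In t (E f n) -> leaves t = n /\ pfb t = true.
Proof.
  revert n t; induction f as [|f IH]; intros n t H; cbn [E] in H; [contradiction|].
  destruct (Nat.eqb_spec n 1).
  - destruct H as [<-|[]]. auto.
  - destruct (Nat.eqb_spec n 3); [contradiction|].
    apply in_flat_map in H as [k [Hk H]].
    apply in_flat_map in H as [l [Hl H]].
    apply in_map_iff in H as [r [<- Hr]].
    apply IH in Hl as [Hl1 Hl2]. apply IH in Hr as [Hr1 Hr2].
    apply in_seq in Hk.
    simpl. rewrite Hl2, Hr2, Hl1, Hr1. split; [lia|].
    simpl. apply Bool.negb_true_iff, Nat.eqb_neq. lia.
Qed.

Lemma E_complete f n t : n <= f -> leaves t = n -> pfb t = true -> In t (E f n).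
Proof.
  revert n t; induction f as [|f IH]; intros n t Hn Hl Hp.
  - pose proof (leaves_pos t); lia.
  - cbn [E]. destruct (Nat.eqb_spec n 1).
    + rewrite (leaves1 t) by congruence. left; auto.
    + destruct t as [|l r]; [simpl in Hl; lia|].
      simpl in Hp. rewrite !Bool.andb_true_iff, Bool.negb_true_iff, Nat.eqb_neq in Hp.
      destruct Hp as [[Hpl Hpr] H3]. simpl in Hl.
      destruct (Nat.eqb_spec n 3); [lia|].
      pose proof (leaves_pos l); pose proof (leaves_pos r).
      apply in_flat_map. exists (leaves l). split; [apply in_seq; lia|].
      apply in_flat_map. exists l. split; [apply IH; auto; lia|].
      apply in_map. apply IH; auto; lia.
Qed.

Lemma NoDup_flat_map_disj {A B} (g : A -> list B) (l : list A) :
  NoDup l -> (forall x, NoDup (g x)) ->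
  (forall x y z, In z (g x) -> In z (g y) -> x = y) -> NoDup (flat_map g l).
Proof.
  intros Hl Hg Hd. induction Hl as [|x l Hx Hl IH]; simpl; [constructor|].
  apply NoDup_app; auto.
  intros z Hz1 Hz2. apply in_flat_map in Hz2 as [y [Hy Hz2]].
  assert (x = y) by (eapply Hd; eauto). subst. contradiction.
Qed.

Lemma E_nodup f n : NoDup (E f n).
Proof.
  revert n; induction f as [|f IH]; intros n; cbn [E]; [constructor|].
  destruct (Nat.eqb n 1); [constructor; [simpl; auto|constructor]|].
  destruct (Nat.eqb n 3); [constructor|].
  apply NoDup_flat_map_disj.
  - apply seq_NoDup.
  - intros k. apply NoDup_flat_map_disj; auto.
    + intros l. apply NoDup_map_NoDup_ForallPairs; auto.
      intros x y _ _ H. injection H; auto.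
    + intros x y z H1 H2. apply in_map_iff in H1 as [r1 [<- _]].
      apply in_map_iff in H2 as [r2 [H _]]. injection H; auto.
  - intros x y z H1 H2.
    apply in_flat_map in H1 as [l1 [Hl1 H1]]. apply in_map_iff in H1 as [r1 [<- _]].
    apply in_flat_map in H2 as [l2 [Hl2 H2]]. apply in_map_iff in H2 as [r2 [H _]].
    injection H; intros _ ->. apply E_sound in Hl1 as [A _]. apply E_sound in Hl2 as [B _].
    congruence.
Qed.

Lemma E_len p (hp : forall n, counts_pitchfork_free n (p n)) f n :
  n <= f -> length (E f n) = p n.
Proof.
  intros Hn. destruct (hp n) as [l [Hnd [Hlen Hin]]]. rewrite <- Hlen.
  apply Nat.le_antisymm; apply NoDup_incl_length; try apply E_nodup; auto.
  - intros t Ht. apply Hin. apply E_sound in Ht as [A B]. split; auto. apply pfb_spec; auto.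
  - intros t Ht. apply Hin in Ht as [A B]. apply E_complete; auto. apply pfb_spec; auto.
Qed.

Lemma list_sum_repeat a m : list_sum (repeat a m) = (m * a)%nat.
Proof. induction m; simpl; auto. Qed.

Lemma E_S f n : E (S f) n =
    if Nat.eqb n 1 then [Leaf]
    else if Nat.eqb n 3 then []
    else flat_map (fun k => flat_map (fun l => map (fun r => Node l r) (E f (n - k))) (E f k))
                  (seq 0 (S n)).
Proof. reflexivity. Qed.

Lemma E0 f : E f 0 = [].
Proof.
  induction f; simpl; auto. rewrite IHf. reflexivity.
Qed.

Lemma list_sum_seq g n :
  INR (list_sum (map g (seq 0 (S n)))) = sum_f_R0 (fun k => INR (g k)) n.
Proof.
  induction n.
  - simpl. rewrite Nat.add_0_r. reflexivity.
  - rewrite (seq_S (S n)), map_app, list_sum_app, plus_INR, IHn. simpl.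
    rewrite Nat.add_0_r. reflexivity.
Qed.

Lemma p_props p (hp : forall n, counts_pitchfork_free n (p n)) :
  p 0 = 0%nat /\ p 1 = 1%nat /\
  forall n, (2 <= n)%nat ->
    (INR (p n) + (if Nat.eqb n 3 then 2 else 0) =
    sum_f_R0 (fun k => INR (p k) * INR (p (n - k)%nat)) n)%R.
Proof.
  assert (P0 : p 0 = 0) by (rewrite <- (E_len p hp 0 0); auto).
  assert (P1 : p 1 = 1) by (rewrite <- (E_len p hp 1 1); auto).
  assert (P2 : p 2 = 1) by (rewrite <- (E_len p hp 2 2); auto).
  assert (P3 : p 3 = 0) by (rewrite <- (E_len p hp 3 3); auto).
  split; [auto|split; [auto|]].
  intros n Hn. destruct (Nat.eqb_spec n 3).
  - subst. simpl. rewrite P0, P1, P2, P3. simpl. lra.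
  - rewrite Rplus_0_r.
    rewrite <- (E_len p hp n n) by lia.
    destruct n as [|f]; [lia|]. rewrite E_S.
    rewrite (proj2 (Nat.eqb_neq (S f) 1)) by lia.
    rewrite (proj2 (Nat.eqb_neq (S f) 3)) by lia.
    rewrite length_flat_map, list_sum_seq.
    apply sum_eq. intros k Hk.
    rewrite length_flat_map.
    rewrite (map_ext _ (fun _ => length (E f (S f - k)))) by (intros; apply length_map).
    rewrite map_const, list_sum_repeat, mult_INR.
    destruct (Nat.eq_dec k 0) as [->|Hk0].
    + rewrite E0, P0. simpl. lra.
    + destruct (Nat.eq_dec k (S f)) as [->|Hkf].
      * rewrite Nat.sub_diag, E0, P0. simpl. lra.
      * rewrite !(E_len p hp) by lia. lra.
Qed.

From Stdlib Require Import Reals Lra Lia.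
From Stdlib Require Import Arith.
Open Scope R_scope.

Definition rr : R := (sqrt 5 - 1) / 4.
Fixpoint cc (n : nat) : R := match n with O => 1 | S m => cc m * (2 * INR m + 1) / (2 * INR m + 2) end.
Definition bb (n : nat) : R := match n with O => 1 | S m => - cc m / (2 * INR m + 2) end.
Definition conv (a c : nat -> R) (n : nat) : R := sum_f_R0 (fun k => a k * c (n - k)%nat) n.
Definition xb : R := 2 * rr.
Definition yb : R := - (4 * rr ^ 2).
Definition beta (i : nat) : R := bb i * xb ^ i.
Definition gam (i : nat) : R := bb i * yb ^ i.
Definition ee (n : nat) : R := conv beta gam n.
Definition ss (p : nat -> nat) (n : nat) : R := (if Nat.eqb n 0 then 1 else 0) - 2 * INR (p n).

Lemma rr_eq : 4 * rr ^ 2 = 1 - 2 * rr.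
Proof. unfold rr. pose proof (sqrt_sqrt 5). nra. Qed.

Lemma bb_rec i : INR (S i) * bb (S i) = (INR i - /2) * bb i.
Proof.
  destruct i as [|m].
  - simpl. field.
  - change (bb (S (S m))) with (- cc (S m) / (2 * INR (S m) + 2)).
    change (bb (S m)) with (- cc m / (2 * INR m + 2)).
    change (cc (S m)) with (cc m * (2 * INR m + 1) / (2 * INR m + 2)).
    rewrite !S_INR. pose proof (pos_INR m). field. lra.
Qed.

Lemma bb_rec2 i : INR (S i) * bb (S i) * INR 2 = bb i * (INR i * INR 2 - 1).
Proof. rewrite bb_rec. simpl INR. lra. Qed.

Lemma L1 : 1 + xb + yb = INR 4 * rr.
Proof. unfold xb, yb. pose proof rr_eq. simpl INR. lra. Qed.
Lemma L2 : xb + yb + xb * yb = 0.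
Proof. unfold xb, yb. pose proof rr_eq. nra. Qed.
Lemma L3 : xb * yb = - (INR 8 * rr ^ 3).
Proof. unfold xb, yb. simpl INR. ring. Qed.
Lemma ss_alt p n : ss p n = (if Nat.eqb n 0 then 1 else 0) - INR 2 * INR (p n).
Proof. unfold ss. simpl INR. ring. Qed.
Lemma Prec_alt (p : nat -> nat) n :
  INR (p n) + (if Nat.eqb n 3 then 2 else 0) = conv (fun k => INR (p k)) (fun k => INR (p k)) n ->
  conv (fun k => INR (p k)) (fun k => INR (p k)) n = INR (p n) + (if Nat.eqb n 3 then INR 2 else 0).
Proof. intros H. rewrite <- H. simpl INR. destruct (Nat.eqb n 3); ring. Qed.

Lemma ss_0 p : ss p 0 = 1 - INR 2 * INR (p 0%nat).
Proof. unfold ss. simpl. ring. Qed.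
Lemma ss_S p k : ss p (S k) = - (INR 2 * INR (p (S k))).
Proof. unfold ss. simpl. ring. Qed.

Lemma T0 : bb 0 * (beta 0 * gam 0) = 1.
Proof. unfold beta, gam, bb. simpl. ring. Qed.

Arguments bb : simpl never.
Arguments cc : simpl never.

From mathcomp Require all_boot all_algebra.
From mathcomp Require Rstruct ring lra.

Module Formal.
Import all_boot all_algebra Rstruct ring lra.
Import GRing.Theory Num.Theory.
Local Open Scope ring_scope.

Definition mconv (a c : nat -> R) (n : nat) : R := \sum_(k < n.+1) a k * c (n - k)%N.

Lemma sumR_big (f : nat -> R) n : sum_f_R0 f n = \sum_(k < n.+1) f k.
Proof.
  elim: n => [|n IH]; first by rewrite big_ord_recr big_ord0 /= add0r.
  by rewrite big_ord_recr /= -IH.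
Qed.

Lemma convE a c n : conv a c n = mconv a c n.
Proof. by rewrite /conv sumR_big. Qed.

Definition tr N (a : nat -> R) : {poly R} := \poly_(i < N) a i.
Definition eqt N (p q : {poly R}) := forall i, (i < N)%N -> p`_i = q`_i.

Lemma eqt_refl N p : eqt N p p. Proof. by []. Qed.
Lemma eqt_sym N p q : eqt N p q -> eqt N q p. Proof. by move=> h i hi; rewrite h. Qed.
Lemma eqt_trans N p q r : eqt N p q -> eqt N q r -> eqt N p r.
Proof. by move=> h1 h2 i hi; rewrite h1 ?h2. Qed.

Lemma eqt_mul N p p' q q' : eqt N p p' -> eqt N q q' -> eqt N (p * q) (p' * q').
Proof.
  move=> hp hq i hi; rewrite !coefM; apply: eq_bigr => j _.
  have hj : (j < N)%N by apply: leq_ltn_trans hi; rewrite -ltnS.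
  have hij : (i - j < N)%N by apply: leq_ltn_trans hi; apply: leq_subr.
  by rewrite hp // hq.
Qed.

Arguments eqt_trans {N p q r}.
Arguments eqt_mul {N p p' q q'}.
Arguments eqt_sym {N p q}.

Lemma tr_coef N a i : (i < N)%N -> (tr N a)`_i = a i.
Proof. by move=> hi; rewrite coef_poly hi. Qed.

Lemma tr_conv N a c : eqt N (tr N (mconv a c)) (tr N a * tr N c).
Proof.
  move=> i hi; rewrite tr_coef // coefM; apply: eq_bigr => j _.
  have hj : (j < N)%N by apply: leq_ltn_trans hi; rewrite -ltnS.
  have hij : (i - j < N)%N by apply: leq_ltn_trans hi; apply: leq_subr.
  by rewrite !tr_coef.
Qed.

Lemma tr_ext N a (p : {poly R}) : (forall i, a i = p`_i) -> eqt N (tr N a) p.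
Proof. by move=> h i hi; rewrite tr_coef. Qed.

Lemma sqrt_unique (a c : nat -> R) : a 0%N = 1 -> c 0%N = 1 ->
  (forall n, mconv a a n = mconv c c n) -> forall n, a n = c n.
Proof.
  move=> a0 c0 h n; elim: n {-2}n (leqnn n) => [|m IH] n hn.
    by move: hn; rewrite leqn0 => /eqP ->; rewrite a0 c0.
  case: (leqP n m) => [hnm|]; first exact: IH.
  move=> hmn; have -> : n = m.+1 by apply/eqP; rewrite eqn_leq hn hmn.
  have := h m.+1; rewrite /mconv big_ord_recl [in RHS]big_ord_recl.
  rewrite big_ord_recr [in RHS]big_ord_recr /= !subn0 subnn a0 c0.
  have -> : \sum_(i < m) a (bump 0 i) * a (m.+1 - bump 0 i)%N =
            \sum_(i < m) c (bump 0 i) * c (m.+1 - bump 0 i)%N.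
    apply: eq_bigr => i _; rewrite /bump /= add1n subSS.
    have hi := ltn_ord i.
    by rewrite !IH // ?leq_subr // ltnW.
  rewrite /bump /= add1n !mul1r !mulr1 => H; lra.
Qed.


Lemma bb_recm i : bb i.+1 * i.+1%:R * 2%:R = bb i * (i%:R * 2%:R - 1).
Proof.
  have := bb_rec2 i.
  by rewrite !RmultE !RminusE !INRE R1E [_ * bb i.+1]mulrC.
Qed.

Lemma mconv0 a c : mconv a c 0 = a 0%N * c 0%N.
Proof. by rewrite /mconv big_ord1. Qed.

Lemma mconv_split a m : mconv a a m.+1 =
  a 0%N * a m.+1 *+ 2 + \sum_(i < m) a i.+1 * a (m - i)%N.
Proof.
  rewrite /mconv big_ord_recl big_ord_recr /= subn0 subnn.
  rewrite (eq_bigr (fun i : 'I_m => a i.+1 * a (m - i)%N)); last first.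
    by move=> i _; rewrite /bump /= add1n subSS.
  rewrite /bump /= add1n mulr2n; ring.
Qed.

Lemma mconv_scale a c (x : R) n :
  mconv (fun i => a i * x ^+ i) (fun i => c i * x ^+ i) n = mconv a c n * x ^+ n.
Proof.
  rewrite /mconv mulr_suml; apply: eq_bigr => i _.
  have hi : (i <= n)%N by rewrite -ltnS.
  have -> : x ^+ n = x ^+ i * x ^+ (n - i) by rewrite -exprD subnKC.
  ring.
Qed.

Lemma coef_derivE (p : {poly R}) i : p^`()`_i = p`_i.+1 * i.+1%:R.
Proof. by rewrite coef_deriv mulr_natr. Qed.

Lemma g_rec i : mconv bb bb i.+1 * i.+1%:R = mconv bb bb i * (i%:R - 1).
Proof.
  pose N := i.+2.
  pose B := tr N bb.
  pose D2 := B^`() + B^`() - 'X * B^`() - 'X * B^`() + B.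
  have hD : eqt N.-1 D2 0.
    move=> j hj; rewrite coef0 /D2 !coefD !coefN !coefXM !coef_derivE.
    have hj1 : (j.+1 < N)%N by [].
    have hj0 : (j < N)%N by apply: ltnW.
    case: j hj hj1 hj0 => [|k] hj hj1 hj0.
      rewrite !tr_coef //.
      have := bb_recm 0; rewrite !mul0r => H.
      rewrite eqxx !mulr1; lra.
    rewrite /= !tr_coef //.
    have := bb_recm k.+1 => H.
    transitivity (bb k.+2 * k.+2%:R * 2 - bb k.+1 * (k.+1%:R * 2 - 1)); [ring | by rewrite H subrr].
  pose G := B * B.
  pose EE := G^`() - 'X * G^`() + G.
  have hE : EE = B * D2 by rewrite /EE /G /D2 derivM; ring.
  have hE0 : eqt N.-1 EE 0.
    rewrite hE -(mulr0 B); apply: eqt_mul => //; exact: eqt_refl.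
  have hG : eqt N G (tr N (mconv bb bb)).
    apply: eqt_sym; apply: tr_conv.
  have := hE0 i (ltnSn i).
  rewrite coef0 /EE !coefD !coefN coefXM !coef_derivE.
  have hif : (if i == 0%N then 0 else G`_i.-1.+1 * i.-1.+1%:R) = G`_i * i%:R.
    by case: (i) => [|k] //=; rewrite mulr0.
  rewrite hif (hG i.+1) // (hG i) // !tr_coef // => H.
  apply/eqP; rewrite -subr_eq0; apply/eqP; rewrite -H; ring.
Qed.

Lemma g_val n : mconv bb bb n = if n == 0%N then 1 else if n == 1%N then -1 else 0.
Proof.
  have g0 : mconv bb bb 0 = 1 by rewrite mconv0 /bb mulr1.
  have g1 : mconv bb bb 1 = -1 by have := g_rec 0; rewrite g0 mulr1 mul1r sub0r.
  case: n => [|[|n]] //=.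
  elim: n => [|n IH].
    by have := g_rec 1; rewrite g1 subrr mulr0 => /eqP; rewrite mulf_eq0 pnatr_eq0 orbF => /eqP.
  have := g_rec n.+2; rewrite IH mul0r => /eqP; rewrite mulf_eq0 pnatr_eq0 orbF => /eqP //.
Qed.


Lemma mconv_ext a a' c c' n : (forall i, a i = a' i) -> (forall i, c i = c' i) ->
  mconv a c n = mconv a' c' n.
Proof. by move=> ha hc; apply: eq_bigr => i _; rewrite ha hc. Qed.

Lemma scaled_coef (x : R) i : mconv bb bb i * x ^+ i = (1 - x%:P * 'X)`_i.
Proof.
  rewrite g_val coefB coef1 coefCM coefX.
  by case: i => [|[|i]] /=; rewrite ?mul1r ?mulr0 ?mul0r ?subr0 ?sub0r ?mulr1 ?expr1 ?mulN1r.
Qed.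

Lemma mconv_scaled (c : nat -> R) (x : R) i : (forall j, c j = bb j * x ^+ j) ->
  mconv c c i = (1 - x%:P * 'X)`_i.
Proof.
  move=> hc; rewrite -scaled_coef -mconv_scale; apply: mconv_ext => j; exact: hc.
Qed.

Lemma L1m : 1 + xb + yb = 4%:R * rr.
Proof. by have := L1; rewrite !RplusE RmultE R1E INRE. Qed.
Lemma L2m : xb + yb + xb * yb = 0.
Proof. by have := L2; rewrite !RplusE RmultE R0E. Qed.
Lemma L3m : xb * yb = - (8%:R * rr ^+ 3).
Proof. by have := L3; rewrite RmultE RoppE RmultE INRE RpowE. Qed.

Definition qc (n : nat) : R :=
  if n == 0%N then 1 else if n == 1%N then -(1 + xb + yb)
  else if n == 2%N then xb + yb + xb * yb else if n == 3%N then - (xb * yb) else 0.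

Lemma Pxy_coef n : ((1 - 'X) * (1 - xb%:P * 'X) * (1 - yb%:P * 'X))`_n = qc n.
Proof.
  have -> : (1 - 'X) * (1 - xb%:P * 'X) * (1 - yb%:P * 'X) =
    1 - (1 + xb + yb)%:P * 'X + (xb + yb + xb * yb)%:P * 'X^2 - (xb * yb)%:P * 'X^3.
    rewrite !polyCD !polyCM polyC1; ring.
  rewrite !coefD !coefN coef1 !coefCM coefX !coefXn /qc.
  case: n => [|[|[|[|n]]]] /=; rewrite ?mulr0 ?mulr1 ?subr0 ?addr0 ?oppr0 ?sub0r ?add0r //.
Qed.

Lemma T_sq n : mconv (mconv bb (mconv beta gam)) (mconv bb (mconv beta gam)) n = qc n.
Proof.
  pose N := n.+1.
  pose T := mconv bb (mconv beta gam).
  have e2 : eqt N (tr N T) (tr N bb * (tr N beta * tr N gam)).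
    refine (eqt_trans (tr_conv N bb (mconv beta gam)) _).
    refine (eqt_mul (eqt_refl _ _) (tr_conv _ _ _)).
  have e3 : eqt N (tr N (mconv T T))
     ((tr N (mconv bb bb)) * (tr N (mconv beta beta)) * (tr N (mconv gam gam))).
    refine (eqt_trans (tr_conv N T T) _).
    refine (eqt_trans (eqt_mul e2 e2) _).
    have -> : tr N bb * (tr N beta * tr N gam) * (tr N bb * (tr N beta * tr N gam)) =
      (tr N bb * tr N bb) * (tr N beta * tr N beta) * (tr N gam * tr N gam) by ring.
    refine (eqt_mul (eqt_mul _ _) _); apply: eqt_sym; exact: tr_conv.
  have e4 : eqt N (tr N (mconv T T)) ((1 - 'X) * (1 - xb%:P * 'X) * (1 - yb%:P * 'X)).
    refine (eqt_trans e3 (eqt_mul (eqt_mul _ _) _)); apply: tr_ext => i.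
    - by have := scaled_coef 1 i; rewrite expr1n mulr1 polyC1 mul1r.
    - by apply: mconv_scaled => j; rewrite /beta RpowE.
    - by apply: mconv_scaled => j; rewrite /gam RpowE.
  by have := e4 n (ltnSn n); rewrite tr_coef // Pxy_coef.
Qed.

Lemma formal_main (p : nat -> nat) (P0 : p 0%N = 0%N) (P1 : p 1%N = 1%N)
  (Prec : forall n, (2 <= n)%N -> mconv (fun k => INR (p k)) (fun k => INR (p k)) n =
            INR (p n) + (if Nat.eqb n 3 then INR 2 else 0)) :
  forall n, ss p n * rr ^+ n = mconv bb (mconv beta gam) n.
Proof.
  pose pp := fun k => INR (p k).
  have s0 : ss p 0 = 1 by rewrite ss_0 P0 !INRE RminusE RmultE R1E; ring.
  have sS : forall k, ss p k.+1 = - (2%:R * pp k.+1) by move=> k; rewrite ss_S INRE RoppE RmultE.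
  apply: sqrt_unique.
  - by rewrite s0 expr0 mulr1.
  - by rewrite !mconv0; exact: T0.
  move=> n; rewrite T_sq mconv_scale.
  case: n => [|m].
    by rewrite mconv0 s0 expr0 !mulr1 /qc.
  have hss : mconv (ss p) (ss p) m.+1 = - (4%:R * pp m.+1) + 4%:R * mconv pp pp m.+1.
    rewrite !mconv_split s0 sS.
    rewrite (eq_bigr (fun i : 'I_m => 4%:R * (pp i.+1 * pp (m - i)%N))); last first.
      move=> i _; have hi := ltn_ord i.
      have -> : (m - i = (m - i).-1.+1)%N by rewrite prednK // subn_gt0.
      rewrite !sS /pp; ring.
    have pp0 : pp 0%N = 0 by rewrite /pp P0 INRE. 
    by rewrite -mulr_sumr pp0; ring.
  rewrite hss /qc.
  case: m hss => [|m] hss.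
    rewrite /= mconv_split /pp P0 INRE mul0r mul0rn big_ord0 addr0 mulr0 addr0 expr1.
    by rewrite P1 L1m; ring.
  rewrite Prec // /pp.
  case: m hss => [|[|m]] hss /=.
  - by rewrite L2m; ring.
  - by rewrite L3m RplusE R1E; ring.
  - by ring.
Qed.

End Formal.

Module Formal2.
Import all_boot all_algebra Rstruct ring lra.
Import GRing.Theory Num.Theory.
Import Formal.
Local Open Scope ring_scope.

Lemma beta_vals n : mconv beta beta n = if n == 0%N then 1 else if n == 1%N then - xb else 0.
Proof.
  rewrite (@mconv_scaled _ xb); last by move=> j; rewrite /beta RpowE.
  rewrite coefB coef1 coefCM coefX.
  by case: n => [|[|n]] /=; rewrite ?mulr0 ?subr0 ?mulr1 ?sub0r.
Qed.
Lemma gam_vals n : mconv gam gam n = if n == 0%N then 1 else if n == 1%N then - yb else 0.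
Proof.
  rewrite (@mconv_scaled _ yb); last by move=> j; rewrite /gam RpowE.
  rewrite coefB coef1 coefCM coefX.
  by case: n => [|[|n]] /=; rewrite ?mulr0 ?subr0 ?mulr1 ?sub0r.
Qed.

Lemma formal_std (p : nat -> nat) (P0 : p 0%N = 0%N) (P1 : p 1%N = 1%N)
  (Prec : forall n, (2 <= n)%coq_nat -> conv (fun k => INR (p k)) (fun k => INR (p k)) n =
            INR (p n) + (if Nat.eqb n 3 then INR 2 else 0)) :
  forall n, rr ^+ n * ss p n = conv bb ee n.
Proof.
  move=> n; rewrite mulrC (formal_main _ P0 P1); last by move=> k hk; rewrite -convE Prec //; apply/leP.
  rewrite convE; apply: mconv_ext => // i; by rewrite /ee convE.
Qed.

Lemma conv_comm a c n : conv a c n = conv c a n.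
Proof.
  have h1 := tr_conv n.+1 a c n (ltnSn n).
  have h2 := tr_conv n.+1 c a n (ltnSn n).
  rewrite !tr_coef // in h1 h2.
  by rewrite !convE h1 h2 mulrC.
Qed.
End Formal2.


Lemma conv_beta n : conv beta beta n = if Nat.eqb n 0 then 1 else if Nat.eqb n 1 then - xb else 0.
Proof.
  rewrite Formal.convE, Formal2.beta_vals. destruct n as [|[|n]]; reflexivity.
Qed.
Lemma conv_gam n : conv gam gam n = if Nat.eqb n 0 then 1 else if Nat.eqb n 1 then - yb else 0.
Proof.
  rewrite Formal.convE, Formal2.gam_vals. destruct n as [|[|n]]; reflexivity.
Qed.
Goal forall x y : R, x <= y -> y <= x -> x = y. intros. lra. Qed.

From Stdlib Require Import Reals Lra Lia.
From Coquelicot Require Import Coquelicot.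
Open Scope R_scope.

Definition W (m : nat) : R := RInt (fun x => sin x ^ m) 0 (PI / 2).

Lemma ex_W m : ex_RInt (fun x => sin x ^ m) 0 (PI / 2).
Proof.
  apply (ex_RInt_continuous (V := R_CompleteNormedModule)). intros z _.
  assert (H : ex_derive (fun x => sin x ^ m) z) by (auto_derive; auto).
  exact (ex_derive_continuous (fun x => sin x ^ m) z H).
Qed.

Lemma W_rec m : INR (m + 2) * W (m + 2) = INR (m + 1) * W m.
Proof.
  set (F := fun x => - cos x * sin x ^ (m + 1)).
  set (f := fun x => INR (m + 2) * sin x ^ (m + 2) - INR (m + 1) * sin x ^ m).
  assert (HD : forall x, is_derive F x (f x)).
  { intros x. unfold F, f. auto_derive; auto.
    replace (Init.Nat.pred (m + 1)) with m by lia.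
    replace (sin x ^ (m + 1)) with (sin x ^ m * sin x) by (rewrite pow_add; ring).
    replace (sin x ^ (m + 2)) with (sin x ^ m * (sin x * sin x)) by (rewrite pow_add; ring).
    replace (INR (m + 2)) with (INR (m + 1) + 1) by (rewrite !plus_INR; simpl; ring).
    assert (E : cos x * cos x = 1 - sin x * sin x) by (pose proof (sin2_cos2 x); unfold Rsqr in *; lra).
    generalize (sin x ^ m) (INR (m + 1)). intros P k.
    replace (- cos x * (1 * cos x * (k * P))) with (- (cos x * cos x) * k * P) by ring.
    rewrite E. ring. }
  assert (HC : forall x, continuous f x).
  { intros x. assert (H : ex_derive f x) by (unfold f; auto_derive; auto).
    exact (ex_derive_continuous f x H). }
  pose proof (is_RInt_derive F f 0 (PI/2) (fun x _ => HD x) (fun x _ => HC x)) as H.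
  pose proof (is_RInt_unique _ _ _ _ H) as U1.
  assert (U2 : RInt f 0 (PI/2) = INR (m + 2) * W (m + 2) - INR (m + 1) * W m).
  { transitivity (RInt (fun x => minus (scal (INR (m + 2)) (sin x ^ (m + 2))) (scal (INR (m + 1)) (sin x ^ m))) 0 (PI/2)).
    { apply RInt_ext. intros. reflexivity. }
    rewrite (RInt_minus (V := R_CompleteNormedModule)).
    - rewrite !(RInt_scal (V := R_CompleteNormedModule)) by apply ex_W. reflexivity.
    - apply (ex_RInt_scal (V := R_CompleteNormedModule)). apply ex_W.
    - apply (ex_RInt_scal (V := R_CompleteNormedModule)). apply ex_W. }
  rewrite U1 in U2. unfold minus, plus, opp, F in U2. simpl in U2.
  rewrite cos_PI2, sin_0, cos_0, pow_i in U2 by lia. lra.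
Qed.

Lemma W0 : W 0 = PI / 2.
Proof.
  unfold W. simpl. rewrite RInt_const. unfold scal; simpl. unfold mult; simpl. ring.
Qed.

Lemma W1 : W 1 = 1.
Proof.
  assert (HD : forall x, is_derive (fun x => - cos x) x (sin x ^ 1)).
  { intros x. auto_derive; auto. ring. }
  assert (HC : forall x, continuous (fun x => sin x ^ 1) x).
  { intros x. assert (H : ex_derive (fun x => sin x ^ 1) x) by (auto_derive; auto).
    exact (ex_derive_continuous _ x H). }
  pose proof (is_RInt_derive _ _ 0 (PI/2) (fun x _ => HD x) (fun x _ => HC x)) as H.
  pose proof (is_RInt_unique _ _ _ _ H) as U. unfold W. rewrite U.
  unfold minus, plus, opp; simpl. rewrite cos_PI2, cos_0. ring.
Qed.

Lemma W_mono m : W (S m) <= W m.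
Proof.
  apply RInt_le.
  - pose proof PI_RGT_0. lra.
  - apply ex_W.
  - apply ex_W.
  - intros x Hx. simpl.
    assert (0 <= sin x) by (apply sin_ge_0; pose proof PI_RGT_0; lra).
    assert (sin x <= 1) by apply SIN_bound.
    assert (0 <= sin x ^ m) by (apply pow_le; lra).
    nra.
Qed.

Lemma cc_0 : cc 0 = 1. Proof. reflexivity. Qed.
Lemma cc_S n : cc (S n) = cc n * (2 * INR n + 1) / (2 * INR n + 2). Proof. reflexivity. Qed.
Lemma bb_S n : bb (S n) = - cc n / (2 * INR n + 2). Proof. reflexivity. Qed.
Lemma bb_0 : bb 0 = 1. Proof. reflexivity. Qed.

Lemma cc_pos n : 0 < cc n.
Proof.
  induction n; [rewrite cc_0; lra|]. rewrite cc_S.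
  pose proof (pos_INR n). apply Rmult_lt_0_compat; [apply Rmult_lt_0_compat; lra|].
  apply Rinv_0_lt_compat; lra.
Qed.

Lemma W_step m : W (m + 2) = INR (m + 1) / INR (m + 2) * W m.
Proof.
  pose proof (W_rec m) as H.
  assert (0 < INR (m + 2)) by (apply lt_0_INR; lia).
  apply (Rmult_eq_reg_l (INR (m + 2))); [|lra].
  rewrite H. field. lra.
Qed.

Lemma W_even n : W (2 * n) = PI / 2 * cc n.
Proof.
  induction n.
  - simpl. rewrite W0, cc_0. ring.
  - replace (2 * S n)%nat with (2 * n + 2)%nat by lia.
    rewrite W_step, IHn, cc_S, !plus_INR, mult_INR. simpl INR.
    pose proof (pos_INR n). field. lra.
Qed.

Lemma W_odd n : W (2 * n + 1) * (2 * INR n + 1) * cc n = 1.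
Proof.
  induction n.
  - simpl. rewrite W1, cc_0. ring.
  - replace (2 * S n + 1)%nat with ((2 * n + 1) + 2)%nat by lia.
    rewrite W_step, cc_S, S_INR. rewrite <- IHn at 4.
    rewrite !plus_INR, mult_INR. simpl INR.
    pose proof (pos_INR n). field. lra.
Qed.

Lemma cc_bounds n :
  2 / (PI * (2 * INR n + 1)) <= cc n ^ 2 /\
  cc n ^ 2 * (2 * INR n + 1) ^ 2 <= 2 * (2 * INR n + 2) / PI.
Proof.
  pose proof (W_mono (2 * n)) as M1.
  pose proof (W_mono (2 * n + 1)) as M2.
  replace (S (2 * n)) with (2 * n + 1)%nat in M1 by lia.
  replace (S (2 * n + 1)) with (2 * S n)%nat in M2 by lia.
  rewrite W_even in M1, M2. pose proof (W_odd n) as O.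
  rewrite cc_S in M2. pose proof (cc_pos n). pose proof PI_RGT_0. pose proof (pos_INR n).
  assert (Wo : W (2 * n + 1) = / ((2 * INR n + 1) * cc n)).
  { apply (Rmult_eq_reg_r ((2 * INR n + 1) * cc n)).
    - rewrite Rinv_l by (apply Rgt_not_eq, Rmult_lt_0_compat; lra).
      rewrite <- Rmult_assoc. exact O.
    - apply Rgt_not_eq. apply Rmult_lt_0_compat; lra. }
  rewrite Wo in M1, M2.
  split.
  - apply (Rmult_le_reg_r (PI * (2 * INR n + 1))); [apply Rmult_lt_0_compat; lra|].
    unfold Rdiv. rewrite Rmult_assoc, Rinv_l by (apply Rgt_not_eq, Rmult_lt_0_compat; lra).
    apply (Rmult_le_compat_l (2 / PI * cc n * (2 * INR n + 1))) in M1.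
    + replace (2 / PI * cc n * (2 * INR n + 1) * / ((2 * INR n + 1) * cc n)) with (2 / PI) in M1 by (field; split; lra).
      replace (2 / PI * cc n * (2 * INR n + 1) * (PI / 2 * cc n)) with (cc n ^ 2 * (2 * INR n + 1)) in M1 by (field; lra).
      apply (Rmult_le_compat_l PI) in M1; [|lra].
      replace (PI * (2 / PI)) with 2 in M1 by (field; lra). nra.
    + apply Rmult_le_pos; [apply Rmult_le_pos|]; try lra. apply Rlt_le, Rdiv_lt_0_compat; lra.
  - set (c := cc n) in *. set (k := 2 * INR n + 1) in *.
    assert (Hk : 0 < k) by (unfold k; lra).
    assert (E2 : PI / 2 * (c * (2 * INR n + 1) / (2 * INR n + 2)) <= / (k * c)) by exact M2.
    replace (2 * INR n + 1) with k in E2 by reflexivity.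
    replace (2 * INR n + 2) with (k + 1) in E2 by (unfold k; ring).
    replace (2 * INR n + 2) with (k + 1) by (unfold k; ring).
    apply (Rmult_le_compat_l (2 / PI * c * k * (k + 1))) in E2.
    + replace (2 / PI * c * k * (k + 1) * (PI / 2 * (c * k / (k + 1)))) with (c ^ 2 * k ^ 2) in E2 by (field; split; lra).
      replace (2 / PI * c * k * (k + 1) * / (k * c)) with (2 * (k + 1) / PI) in E2 by (field; split; lra).
      exact E2.
    + apply Rmult_le_pos; [|lra]. apply Rmult_le_pos; [|lra]. apply Rmult_le_pos; [|lra].
      apply Rlt_le, Rdiv_lt_0_compat; lra.
Qed.

Lemma lim_t : is_lim_seq (fun m => / (INR m + 1)) 0.
Proof.
  assert (H : is_lim_seq (fun m => INR (S m)) p_infty).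
  { apply (is_lim_seq_incr_1 INR p_infty). apply is_lim_seq_INR. }
  pose proof (is_lim_seq_inv _ _ H) as H2.
  assert (Hn : p_infty <> 0) by discriminate.
  specialize (H2 Hn). simpl in H2.
  apply (is_lim_seq_ext (fun n => / INR (S n))); [intros; rewrite S_INR; reflexivity|exact H2].
Qed.

Lemma lim_r : is_lim_seq (fun m => 2 / (2 - / (INR m + 1))) 1.
Proof.
  assert (H : is_lim_seq (fun m => 2 * / (2 - / (INR m + 1))) (Rbar_mult 2 (Rbar_inv (2 - 0)))).
  { apply (is_lim_seq_scal_l _ 2 (Rbar_inv (2 - 0))).
    apply (is_lim_seq_inv _ (2 - 0)).
    - apply (is_lim_seq_minus' (fun _ => 2) _ 2 0); [apply is_lim_seq_const|apply lim_t].
    - intro H. injection H. lra. }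
  simpl in H. replace (2 * / (2 - 0)) with 1 in H by field. exact H.
Qed.

Lemma lim_sq_cc : is_lim_seq (fun m => (INR m + 1) * cc m ^ 2) (/ PI).
Proof.
  pose proof PI_RGT_0.
  apply (is_lim_seq_le_le (fun m => / PI * (2 / (2 - / (INR m + 1))))
                          _ (fun m => / PI * (2 / (2 - / (INR m + 1)) * (2 / (2 - / (INR m + 1)))))).
  - intros m. pose proof (cc_bounds m) as [B1 B2]. pose proof (pos_INR m).
    assert (E : 2 / (2 - / (INR m + 1)) = (2 * INR m + 2) / (2 * INR m + 1)).
    { assert (Hm : / (INR m + 1) <= 1).
      { rewrite <- Rinv_1. apply Rinv_le_contravar; lra. }
      assert (Hm2 : 0 < / (INR m + 1)) by (apply Rinv_0_lt_compat; lra).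
      apply (Rmult_eq_reg_r ((2 - / (INR m + 1)) * (2 * INR m + 1))).
      2: { apply Rgt_not_eq. apply Rmult_lt_0_compat; lra. }
      field_simplify; [|lra|lra].
      replace (2 * INR m + 1) with (2 * (INR m + 1) - 1) by ring.
      field. lra. }
    rewrite E. split.
    + apply (Rmult_le_reg_r (PI * (2 * INR m + 1))); [apply Rmult_lt_0_compat; lra|].
      replace (/ PI * ((2 * INR m + 2) / (2 * INR m + 1)) * (PI * (2 * INR m + 1))) with (2 * INR m + 2) by (field; lra).
      apply (Rmult_le_compat_l (PI * (2 * INR m + 1) * (INR m + 1))) in B1; [|apply Rmult_le_pos; [apply Rmult_le_pos|]; lra].
      replace (PI * (2 * INR m + 1) * (INR m + 1) * (2 / (PI * (2 * INR m + 1)))) with (2 * INR m + 2) in B1 by (field; lra).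
      lra.
    + apply (Rmult_le_reg_r (PI * (2 * INR m + 1) ^ 2)); [apply Rmult_lt_0_compat; [lra|]; apply pow_lt; lra|].
      replace (/ PI * ((2 * INR m + 2) / (2 * INR m + 1) * ((2 * INR m + 2) / (2 * INR m + 1))) * (PI * (2 * INR m + 1) ^ 2)) with ((2 * INR m + 2) ^ 2) by (field; lra).
      apply (Rmult_le_compat_l (PI * (INR m + 1))) in B2; [|apply Rmult_le_pos; lra].
      replace (PI * (INR m + 1) * (2 * (2 * INR m + 2) / PI)) with ((2 * INR m + 2) ^ 2) in B2 by (field; lra).
      lra.
  - replace (/ PI) with (/ PI * 1) at 1 by ring. apply (is_lim_seq_scal_l _ (/ PI) 1). apply lim_r.
  - replace (/ PI) with (/ PI * (1 * 1)) at 1 by ring. apply (is_lim_seq_scal_l _ (/ PI) (1 * 1)).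
    apply is_lim_seq_mult'; apply lim_r.
Qed.

Lemma lim_sqrt_cc : is_lim_seq (fun m => sqrt (INR m + 1) * cc m) (/ sqrt PI).
Proof.
  pose proof PI_RGT_0.
  rewrite <- sqrt_inv.
  apply (is_lim_seq_ext (fun m => sqrt ((INR m + 1) * cc m ^ 2))).
  - intros m. pose proof (pos_INR m). pose proof (cc_pos m).
    rewrite sqrt_mult by (try apply pow2_ge_0; lra).
    rewrite sqrt_pow2 by lra. reflexivity.
  - apply (is_lim_seq_continuous sqrt); [apply continuity_pt_sqrt; apply Rlt_le, Rinv_0_lt_compat; lra|].
    apply lim_sq_cc.
Qed.

Definition wt (n : nat) : R := INR n * sqrt (INR n).

Lemma lim_wt_bb : is_lim_seq (fun n => wt n * bb n) (- / 2 * / sqrt PI).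
Proof.
  apply (is_lim_seq_incr_1 (fun n => wt n * bb n)).
  apply (is_lim_seq_ext (fun m => - / 2 * (sqrt (INR m + 1) * cc m))).
  - intros m. unfold wt. rewrite bb_S, S_INR. pose proof (pos_INR m).
    field. lra.
  - apply (is_lim_seq_scal_l _ (- / 2) (/ sqrt PI)). apply lim_sqrt_cc.
Qed.

From Stdlib Require Import Reals Lra Lia.
From Coquelicot Require Import Coquelicot.
Open Scope R_scope.

Lemma finite_lim (G : nat -> nat -> R) (g : nat -> R) J :
  (forall j, is_lim_seq (fun n => G n j) (g j)) ->
  is_lim_seq (fun n => sum_f_R0 (G n) J) (sum_f_R0 g J).
Proof.
  intros H. induction J.
  - simpl. apply H.
  - simpl. apply is_lim_seq_plus'; auto.
Qed.

Lemma series_inf (a : nat -> R) : ex_series a -> infinite_sum a (Series a).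
Proof. intros H. apply is_series_Reals. apply Series_correct. exact H. Qed.

Lemma tannery (G : nat -> nat -> R) (D g : nat -> R) :
  (forall n j, Rabs (G n j) <= D j) -> ex_series D ->
  (forall j, is_lim_seq (fun n => G n j) (g j)) ->
  ex_series g /\ is_lim_seq (fun n => sum_f_R0 (G n) n) (Series g).
Proof.
  intros HB HD HL.
  assert (Hg : forall j, Rabs (g j) <= D j).
  { intros j. pose proof (is_lim_seq_abs _ _ (HL j)) as H1.
    pose proof (is_lim_seq_le _ _ _ _ (fun n => HB n j) H1 (is_lim_seq_const (D j))) as H2.
    simpl in H2. exact H2. }
  assert (Eg : ex_series g).
  { apply (ex_series_le (K := R_AbsRing) (V := R_CompleteNormedModule) g D); auto. }
  split; [exact Eg|].
  apply is_lim_seq_Reals. intros eps Heps.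
  set (e := eps / 5).
  assert (He : 0 < e) by (unfold e; lra).
  destruct (series_inf D HD e He) as [J1 HJ1].
  destruct (series_inf g Eg e He) as [J2 HJ2].
  set (J := max J1 J2).
  pose proof (finite_lim G g J HL) as HF.
  apply is_lim_seq_Reals in HF.
  destruct (HF e He) as [N1 HN1].
  exists (max J N1). intros n Hn.
  unfold R_dist in *.
  assert (HnJ : (J <= n)%nat) by lia.
  assert (A1 : Rabs (sum_f_R0 (G n) J - sum_f_R0 g J) < e) by (apply HN1; lia).
  assert (A2 : Rabs (sum_f_R0 g J - Series g) < e) by (apply HJ2; lia).
  assert (A3 : Rabs (sum_f_R0 D n - Series D) < e) by (apply HJ1; lia).
  assert (A4 : Rabs (sum_f_R0 D J - Series D) < e) by (apply HJ1; lia).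
  destruct (Nat.eq_dec J n) as [E|E].
  - replace (sum_f_R0 (G n) n) with (sum_f_R0 (G n) J) by (rewrite E; reflexivity).
    replace (sum_f_R0 (G n) J - Series g) with ((sum_f_R0 (G n) J - sum_f_R0 g J) + (sum_f_R0 g J - Series g)) by ring.
    eapply Rle_lt_trans; [apply Rabs_triang|]. unfold e in *. lra.
  - rewrite (tech2 (G n) J n) by lia.
    pose proof (tech2 D J n ltac:(lia)) as TD.
    set (T := sum_f_R0 (fun i => G n (S J + i)%nat) (n - S J)) in *.
    set (TDs := sum_f_R0 (fun i => D (S J + i)%nat) (n - S J)) in *.
    assert (A5 : Rabs T <= TDs).
    { eapply Rle_trans; [apply sum_f_R0_triangle|]. apply sum_Rle. intros; apply HB. }
    assert (A6 : TDs < 2 * e).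
    { replace TDs with ((sum_f_R0 D n - Series D) - (sum_f_R0 D J - Series D)) by (rewrite TD; ring).
      apply Rabs_def2 in A3. apply Rabs_def2 in A4. lra. }
    replace (sum_f_R0 (G n) J + T - Series g) with ((sum_f_R0 (G n) J - sum_f_R0 g J) + (sum_f_R0 g J - Series g) + T) by ring.
    eapply Rle_lt_trans; [apply Rabs_triang|].
    eapply Rle_lt_trans; [apply Rplus_le_compat_r; apply Rabs_triang|].
    unfold e in *. lra.
Qed.

From Stdlib Require Import Reals Lra Lia.
From Coquelicot Require Import Coquelicot.
Open Scope R_scope.

Lemma rr_bounds : 1/4 < rr < 1/2.
Proof.
  unfold rr. pose proof (sqrt_sqrt 5 ltac:(lra)). pose proof (sqrt_pos 5).
  split; nra.
Qed.

Lemma xb_bounds : 0 < xb < 1.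
Proof. unfold xb. pose proof rr_bounds. lra. Qed.

Lemma yb_abs : Rabs yb <= xb.
Proof.
  unfold yb, xb. pose proof rr_eq. pose proof rr_bounds.
  rewrite Rabs_Ropp, Rabs_right by nra. lra.
Qed.

Lemma cc_le1 n : cc n <= 1.
Proof.
  induction n; [rewrite cc_0; lra|]. rewrite cc_S. pose proof (pos_INR n). pose proof (cc_pos n).
  apply (Rmult_le_reg_r (2 * INR n + 2)); [lra|].
  unfold Rdiv. rewrite Rmult_assoc, Rinv_l by lra. nra.
Qed.

Lemma bb_abs n : Rabs (bb n) <= 1.
Proof.
  destruct n; [rewrite bb_0, Rabs_R1; lra|]. rewrite bb_S.
  pose proof (pos_INR n). pose proof (cc_pos n). pose proof (cc_le1 n).
  rewrite Rabs_left.
  - apply (Rmult_le_reg_r (2 * INR n + 2)); [lra|].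
    replace (- (- cc n / (2 * INR n + 2)) * (2 * INR n + 2)) with (cc n) by (field; lra). lra.
  - apply Rdiv_neg_pos; lra.
Qed.

Lemma ee_bound j : Rabs (ee j) <= INR (S j) * xb ^ j.
Proof.
  unfold ee, conv. eapply Rle_trans; [apply sum_f_R0_triangle|].
  rewrite Rmult_comm, <- sum_cte. apply sum_Rle. intros i Hi.
  unfold beta, gam. rewrite !Rabs_mult, <- !RPow_abs.
  pose proof (bb_abs i). pose proof (bb_abs (j - i)). pose proof xb_bounds. pose proof yb_abs.
  assert (Hp : Rabs yb ^ (j - i) <= xb ^ (j - i)) by (apply pow_incr; split; [apply Rabs_pos|auto]).
  replace (xb ^ j) with (xb ^ i * xb ^ (j - i)) by (rewrite <- pow_add; f_equal; lia).
  rewrite (Rabs_right xb) by lra.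
  assert (0 <= xb ^ i) by (apply pow_le; lra).
  assert (0 <= Rabs yb ^ (j - i)) by (apply pow_le; apply Rabs_pos).
  pose proof (Rabs_pos (bb i)). pose proof (Rabs_pos (bb (j - i))).
  replace (Rabs (bb i) * xb ^ i * (Rabs (bb (j - i)) * Rabs yb ^ (j - i)))
    with ((Rabs (bb i) * Rabs (bb (j - i))) * (xb ^ i * Rabs yb ^ (j - i))) by ring.
  assert (Rabs (bb i) * Rabs (bb (j - i)) <= 1) by nra.
  assert (xb ^ i * Rabs yb ^ (j - i) <= xb ^ i * xb ^ (j - i)) by (apply Rmult_le_compat_l; auto).
  assert (0 <= xb ^ i * Rabs yb ^ (j - i)) by (apply Rmult_le_pos; auto).
  nra.
Qed.

Lemma sq_le (a b : R) : 0 <= b -> a ^ 2 <= b ^ 2 -> a <= b.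
Proof. intros. nra. Qed.

Lemma bb_wt_bound m : Rabs (bb m) * wt (S m) <= 2.
Proof.
  unfold wt. destruct m.
  - rewrite bb_0, Rabs_R1. simpl. rewrite sqrt_1. lra.
  - rewrite bb_S. pose proof (pos_INR m). pose proof (cc_pos m). pose proof (cc_bounds m) as [_ B2].
    pose proof PI_RGT_0. pose proof PI2_1 as P3.
    rewrite Rabs_left by (apply Rdiv_neg_pos; lra).
    rewrite !S_INR.
    set (c := cc m) in *. set (k := INR m) in *.
    set (s := sqrt (k + 1 + 1)).
    assert (Hs : s * s = k + 2) by (unfold s; rewrite sqrt_sqrt; lra).
    assert (Hs0 : 0 <= s) by apply sqrt_pos.
    replace (- (- c / (2 * k + 2)) * ((k + 1 + 1) * s)) with (c * (k + 2) * s / (2 * k + 2)) by (field; lra).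
    apply (Rmult_le_reg_r (2 * k + 2)); [lra|].
    replace (c * (k + 2) * s / (2 * k + 2) * (2 * k + 2)) with (c * (k + 2) * s) by (field; lra).
    apply sq_le; [lra|].
    replace ((c * (k + 2) * s) ^ 2) with (c ^ 2 * (k + 2) ^ 2 * (s * s)) by ring.
    rewrite Hs.
    assert (C2 : c ^ 2 * (2 * k + 1) ^ 2 <= 2 * k + 2).
    { eapply Rle_trans; [exact B2|]. apply (Rmult_le_reg_r PI); [lra|].
      unfold Rdiv. rewrite Rmult_assoc, Rinv_l by lra. nra. }
    assert (0 <= c ^ 2) by nra.
    assert (K1 : (k + 2) ^ 3 <= 4 * (2 * k + 1) ^ 2 * (2 * k + 2)) by nra.
    assert (C3 : c ^ 2 * (k + 2) ^ 3 * (2 * k + 1) ^ 2 <= (k + 2) ^ 3 * (2 * k + 2)).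
    { replace (c ^ 2 * (k + 2) ^ 3 * (2 * k + 1) ^ 2) with ((c ^ 2 * (2 * k + 1) ^ 2) * (k + 2) ^ 3) by ring.
      rewrite (Rmult_comm ((k + 2) ^ 3)). apply Rmult_le_compat_r; [apply pow_le; lra|exact C2]. }
    assert (0 < (2 * k + 1) ^ 2) by (apply pow_lt; lra).
    apply (Rmult_le_reg_r ((2 * k + 1) ^ 2)); [lra|].
    replace (c ^ 2 * (k + 2) ^ 2 * (k + 2) * (2 * k + 1) ^ 2) with (c ^ 2 * (k + 2) ^ 3 * (2 * k + 1) ^ 2) by ring.
    eapply Rle_trans; [exact C3|]. nra.
Qed.

Lemma wt_nonneg n : 0 <= wt n.
Proof. unfold wt. apply Rmult_le_pos; [apply pos_INR|apply sqrt_pos]. Qed.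

Lemma wt_le n j : (j <= n)%nat -> wt n <= INR (S j) ^ 2 * wt (S (n - j)).
Proof.
  intros Hj. unfold wt.
  set (a := INR n). set (b := INR (S (n - j))). set (c := INR (S j)).
  assert (Hab : a <= c * b).
  { unfold a, b, c. rewrite <- mult_INR. apply le_INR. nia. }
  assert (Hc : 1 <= c) by (unfold c; rewrite S_INR; pose proof (pos_INR j); lra).
  assert (Hb : 1 <= b) by (unfold b; rewrite S_INR; pose proof (pos_INR (n - j)); lra).
  assert (Ha : 0 <= a) by apply pos_INR.
  assert (S1 : sqrt a <= c * sqrt b).
  { eapply Rle_trans; [apply sqrt_le_1_alt; exact Hab|].
    rewrite sqrt_mult_alt by lra. apply Rmult_le_compat_r; [apply sqrt_pos|].
    rewrite <- (sqrt_pow2 c) at 2 by lra. apply sqrt_le_1_alt. nra. }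
  assert (0 <= sqrt a) by apply sqrt_pos.
  assert (0 <= sqrt b) by apply sqrt_pos.
  replace (c ^ 2 * (b * sqrt b)) with ((c * b) * (c * sqrt b)) by ring.
  apply Rmult_le_compat; auto.
Qed.

Lemma lim_ratio : is_lim_seq (fun n => INR (S (S n)) / INR (S n)) 1.
Proof.
  apply (is_lim_seq_ext (fun n => 1 + / (INR n + 1))).
  - intros n. rewrite !S_INR. pose proof (pos_INR n). field. lra.
  - pose proof (is_lim_seq_plus' _ _ 1 0 (is_lim_seq_const 1) lim_t) as H.
    rewrite Rplus_0_r in H. exact H.
Qed.

Definition Dd (j : nat) : R := 2 * (INR (S j) ^ 3 * xb ^ j).

Lemma ex_Dd : ex_series Dd.
Proof.
  pose proof xb_bounds as Hxb.
  assert (H : ex_series (fun n => Rabs (INR (S n) ^ 3 * xb ^ n))).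
  { apply (ex_series_DAlembert _ xb); [lra| |].
    - intros n. apply Rgt_not_eq. apply Rmult_lt_0_compat; apply pow_lt; [apply lt_0_INR; lia|lra].
    - apply (is_lim_seq_ext (fun n => (INR (S (S n)) / INR (S n)) ^ 3 * xb)).
      + intros n. pose proof (lt_0_INR (S n) ltac:(lia)). pose proof (lt_0_INR (S (S n)) ltac:(lia)).
        rewrite Rabs_right.
        * assert (0 < xb ^ n) by (apply pow_lt; lra).
          set (a := INR (S n)) in *. set (b := INR (S (S n))) in *.
          replace (xb ^ S n) with (xb * xb ^ n) by reflexivity.
          field. split; lra.
        * apply Rle_ge. apply Rmult_le_pos.
          { apply Rmult_le_pos; [apply pow_le; lra|]. apply pow_le; lra. }
          apply Rlt_le, Rinv_0_lt_compat. apply Rmult_lt_0_compat; apply pow_lt; lra.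
      + assert (H1 : is_lim_seq (fun n => (INR (S (S n)) / INR (S n)) ^ 3) (1 * (1 * (1 * 1)))).
        { simpl pow. repeat apply is_lim_seq_mult'; try apply lim_ratio; apply is_lim_seq_const. }
        pose proof (is_lim_seq_mult' _ _ _ xb H1 (is_lim_seq_const xb)) as H2.
        replace (1 * (1 * (1 * 1)) * xb) with xb in H2 by ring. exact H2. }
  apply ex_series_Rabs in H.
  unfold Dd. apply (ex_series_scal_l (K := R_AbsRing) 2 _ H).
Qed.

Definition Lc : R := - / 2 * / sqrt PI.

Definition Gt (n j : nat) : R := if (j <=? n)%nat then ee j * (bb (n - j) * wt n) else 0.

Lemma Gt_sum n : wt n * conv bb ee n = sum_f_R0 (Gt n) n.
Proof.
  rewrite Formal2.conv_comm. unfold conv. rewrite scal_sum.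
  apply sum_eq. intros j Hj. unfold Gt.
  replace (j <=? n)%nat with true by (symmetry; apply Nat.leb_le; lia). ring.
Qed.

Lemma Gt_bound n j : Rabs (Gt n j) <= Dd j.
Proof.
  unfold Gt, Dd. pose proof xb_bounds.
  assert (0 <= INR (S j) ^ 3 * xb ^ j) by (apply Rmult_le_pos; apply pow_le; [apply pos_INR|lra]).
  destruct (j <=? n)%nat eqn:E.
  - apply Nat.leb_le in E.
    rewrite !Rabs_mult, (Rabs_right (wt n)) by (apply Rle_ge, wt_nonneg).
    pose proof (ee_bound j). pose proof (wt_le n j E). pose proof (bb_wt_bound (n - j)).
    pose proof (Rabs_pos (ee j)). pose proof (Rabs_pos (bb (n - j))). pose proof (wt_nonneg n).
    pose proof (wt_nonneg (S (n - j))).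
    assert (A : Rabs (bb (n - j)) * wt n <= 2 * INR (S j) ^ 2).
    { eapply Rle_trans. apply Rmult_le_compat_l; [auto|exact H2].
      replace (Rabs (bb (n - j)) * (INR (S j) ^ 2 * wt (S (n - j)))) with
              (INR (S j) ^ 2 * (Rabs (bb (n - j)) * wt (S (n - j)))) by ring.
      rewrite (Rmult_comm 2). apply Rmult_le_compat_l; [apply pow_le, pos_INR|auto]. }
    replace (Rabs (ee j) * (Rabs (bb (n - j)) * wt n)) with (Rabs (ee j) * (Rabs (bb (n - j)) * wt n)) by ring.
    eapply Rle_trans. apply Rmult_le_compat; [auto|apply Rmult_le_pos; auto|exact H1|exact A].
    apply Req_le. ring.
  - rewrite Rabs_R0. lra.
Qed.

Lemma Gt_lim j : is_lim_seq (fun n => Gt n j) (ee j * Lc).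
Proof.
  apply (is_lim_seq_incr_n _ (S j)).
  set (q := fun n : nat => 1 + INR j * / (INR n + 1)).
  apply (is_lim_seq_ext (fun n => ee j * ((wt (S n) * bb (S n)) * (q n * sqrt (q n))))).
  - intros n. unfold Gt.
    replace (j <=? n + S j)%nat with true by (symmetry; apply Nat.leb_le; lia).
    replace (n + S j - j)%nat with (S n) by lia.
    unfold q, wt. pose proof (pos_INR n). pose proof (pos_INR j).
    replace (1 + INR j * / (INR n + 1)) with (INR (n + S j) / INR (S n)).
    2: { rewrite plus_INR, !S_INR. field. lra. }
    rewrite sqrt_div_alt by (apply lt_0_INR; lia).
    assert (0 < sqrt (INR (S n))) by (apply sqrt_lt_R0, lt_0_INR; lia).
    assert (0 < INR (S n)) by (apply lt_0_INR; lia).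
    field. split; lra.
  - replace (ee j * Lc) with (ee j * (Lc * (1 * 1))) by ring.
    apply is_lim_seq_mult'; [apply is_lim_seq_const|].
    apply is_lim_seq_mult'.
    + apply (is_lim_seq_incr_1 (fun n => wt n * bb n)). apply lim_wt_bb.
    + assert (Hq : is_lim_seq q 1).
      { unfold q. pose proof (is_lim_seq_plus' _ _ 1 (INR j * 0) (is_lim_seq_const 1)
           (is_lim_seq_mult' _ _ (INR j) 0 (is_lim_seq_const (INR j)) lim_t)) as H.
        rewrite Rmult_0_r, Rplus_0_r in H. exact H. }
      apply is_lim_seq_mult'; [exact Hq|].
      pose proof (is_lim_seq_continuous sqrt q 1 (continuity_pt_sqrt 1 ltac:(lra)) Hq) as Hs.
      rewrite sqrt_1 in Hs. exact Hs.
Qed.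

Lemma ex_ee : ex_series ee.
Proof.
  apply (ex_series_le (K := R_AbsRing) (V := R_CompleteNormedModule) ee Dd); [|apply ex_Dd].
  intros n. change (norm (ee n)) with (Rabs (ee n)).
  eapply Rle_trans; [apply ee_bound|]. unfold Dd. pose proof xb_bounds.
  assert (1 <= INR (S n)) by (rewrite S_INR; pose proof (pos_INR n); lra).
  assert (0 <= xb ^ n) by (apply pow_le; lra).
  replace (INR (S n) ^ 3) with (INR (S n) * (INR (S n) * INR (S n))) by ring.
  assert (1 <= INR (S n) * INR (S n)) by nra.
  set (a := INR (S n)) in *. set (x := xb ^ n) in *.
  assert (0 <= (a * a - 1) * (a * x)) by (apply Rmult_le_pos; nra).
  assert (0 <= a * x) by nra.
  nra.
Qed.

Lemma conv_lim : is_lim_seq (fun n => wt n * conv bb ee n) (Lc * Series ee).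
Proof.
  destruct (tannery Gt Dd (fun j => ee j * Lc) Gt_bound ex_Dd Gt_lim) as [_ H].
  rewrite Series_scal_r in H. rewrite Rmult_comm.
  apply (is_lim_seq_ext _ _ _ (fun n => eq_sym (Gt_sum n))). exact H.
Qed.

Lemma fin_series (c : R) : is_series (fun n => if Nat.eqb n 0 then 1 else if Nat.eqb n 1 then - c else 0) (1 - c).
Proof.
  apply is_series_Reals. intros eps Heps. exists 1%nat. intros n Hn.
  assert (E : sum_f_R0 (fun n => if Nat.eqb n 0 then 1 else if Nat.eqb n 1 then - c else 0) n = 1 - c).
  { induction n; [lia|]. destruct n; [simpl; ring|].
    rewrite tech5, IHn by lia. simpl. ring. }
  unfold Rdist. match goal with |- Rabs (?s - _) < _ => replace s with (1 - c) by (symmetry; exact E) end.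
  rewrite Rminus_eq_0, Rabs_R0. exact Heps.
Qed.

Lemma abs_beta : ex_series (fun n => Rabs (beta n)).
Proof.
  pose proof xb_bounds.
  apply (ex_series_le (K := R_AbsRing) (V := R_CompleteNormedModule) _ (fun n => xb ^ n)).
  - intros n. change (norm (Rabs (beta n))) with (Rabs (Rabs (beta n))). rewrite Rabs_Rabsolu.
    unfold beta. rewrite Rabs_mult, <- RPow_abs, (Rabs_right xb) by lra.
    pose proof (bb_abs n). assert (0 <= xb ^ n) by (apply pow_le; lra).
    pose proof (Rabs_pos (bb n)). nra.
  - apply ex_series_geom. rewrite Rabs_right; lra.
Qed.

Lemma abs_gam : ex_series (fun n => Rabs (gam n)).
Proof.
  pose proof xb_bounds. pose proof yb_abs.
  apply (ex_series_le (K := R_AbsRing) (V := R_CompleteNormedModule) _ (fun n => xb ^ n)).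
  - intros n. change (norm (Rabs (gam n))) with (Rabs (Rabs (gam n))). rewrite Rabs_Rabsolu.
    unfold gam. rewrite Rabs_mult, <- RPow_abs.
    pose proof (bb_abs n). assert (0 <= Rabs yb ^ n) by (apply pow_le, Rabs_pos).
    assert (Rabs yb ^ n <= xb ^ n) by (apply pow_incr; split; [apply Rabs_pos|auto]).
    pose proof (Rabs_pos (bb n)). nra.
  - apply ex_series_geom. rewrite Rabs_right; lra.
Qed.

Lemma sq_series (a : nat -> R) (c : R) :
  ex_series (fun n => Rabs (a n)) ->
  (forall n, conv a a n = if Nat.eqb n 0 then 1 else if Nat.eqb n 1 then - c else 0) ->
  Series a * Series a = 1 - c.
Proof.
  intros Ha Hc.
  assert (Ea : ex_series a) by (apply ex_series_Rabs; exact Ha).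
  pose proof (is_series_mult a a _ _ (Series_correct _ Ea) (Series_correct _ Ea) Ha Ha) as H.
  apply is_series_unique in H. rewrite <- H.
  apply is_series_unique. apply (is_series_ext _ _ _ (fun n => eq_sym (Hc n))). apply fin_series.
Qed.

Lemma H_sq : Series ee * Series ee = 3 - 8 * rr.
Proof.
  assert (Eb : ex_series beta) by (apply ex_series_Rabs, abs_beta).
  assert (Eg : ex_series gam) by (apply ex_series_Rabs, abs_gam).
  pose proof (is_series_mult beta gam _ _ (Series_correct _ Eb) (Series_correct _ Eg) abs_beta abs_gam) as H.
  apply is_series_unique in H.
  replace (Series ee) with (Series beta * Series gam) by (rewrite <- H; reflexivity).
  replace (Series beta * Series gam * (Series beta * Series gam)) with
    ((Series beta * Series beta) * (Series gam * Series gam)) by ring.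
  rewrite (sq_series beta xb abs_beta conv_beta), (sq_series gam yb abs_gam conv_gam).
  unfold xb, yb. pose proof rr_eq. nra.
Qed.

Require Import Defs.
From Stdlib Require Import Reals Lra Lia.
From Coquelicot Require Import Coquelicot.
Open Scope R_scope.

Lemma main_formal p (hp : forall n, counts_pitchfork_free n (p n)) :
  forall n, rr ^ n * ss p n = conv bb ee n.
Proof.
  destruct (p_props p hp) as [P0 [P1 Prec]].
  intros n. rewrite Rstruct.RpowE.
  apply (Formal2.formal_std p P0 P1).
  intros k Hk. apply Prec_alt. exact (Prec k Hk).
Qed.

Theorem mainTheorem6 (p : nat -> nat)
  (hp : forall n, counts_pitchfork_free n (p n)) :
  let R := (sqrt 5 - 1) / 4 in
  Un_cv (fun n : nat =>
           ((1/4) * sqrt ((4 * R - 24 * R ^ 3) / (PI * INR n ^ 3)) * (1 / R) ^ n)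
           / INR (p n)) 1.
Proof.
  intros R. change R with rr. clear R.
  set (H := Series ee).
  set (A := fun n => wt n * rr ^ n * INR (p n)).
  assert (EA : forall n, A n = - / 2 * (wt n * conv bb ee n)).
  { intros n. unfold A. rewrite <- (main_formal p hp n).
    destruct n.
    - unfold wt. simpl. ring.
    - rewrite ss_S. simpl (INR 2). field. }
  set (K := - / 2 * (Lc * H)).
  assert (LA : is_lim_seq A K).
  { apply (is_lim_seq_ext (fun n => - / 2 * (wt n * conv bb ee n))); [intros; symmetry; apply EA|].
    apply (is_lim_seq_scal_l _ (- / 2) (Lc * H)). apply conv_lim. }
  pose proof PI_RGT_0 as HPI.
  assert (HsPI : 0 < sqrt PI) by (apply sqrt_lt_R0; lra).
  assert (Hrr := rr_bounds).
  assert (EK : K = H / (4 * sqrt PI)) by (unfold K, Lc; field; lra).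
  assert (K0 : 0 <= K).
  { assert (Hle : forall n, 0 <= A n).
    { intros n. unfold A. apply Rmult_le_pos; [apply Rmult_le_pos|apply pos_INR].
      apply wt_nonneg. apply pow_le. lra. }
    pose proof (is_lim_seq_le _ _ _ _ Hle (is_lim_seq_const 0) LA) as X. simpl in X. exact X. }
  assert (H2 : H * H = 3 - 8 * rr) by apply H_sq.
  assert (Hpos : 0 < H).
  { rewrite EK in K0.
    assert (0 <= H).
    { apply (Rmult_le_reg_r (/ (4 * sqrt PI))). apply Rinv_0_lt_compat; lra.
      rewrite Rmult_0_l. exact K0. }
    assert (3 - 8 * rr > 0).
    { unfold rr. pose proof (sqrt_sqrt 5 ltac:(lra)). pose proof (sqrt_pos 5). nra. }
    destruct (Rle_lt_or_eq_dec 0 H); auto. subst. rewrite <- e in H2. lra. }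
  assert (Kpos : 0 < K) by (rewrite EK; apply Rdiv_lt_0_compat; lra).
  assert (Ec : 4 * rr - 24 * rr ^ 3 = H * H).
  { rewrite H2. pose proof rr_eq. nra. }
  apply is_lim_seq_Reals.
  apply (is_lim_seq_ext_loc (fun n => K * / A n)).
  - exists 1%nat. intros n Hn.
    rewrite Ec. unfold A.
    assert (Hn0 : 0 < INR n) by (apply lt_0_INR; lia).
    rewrite sqrt_div_alt by (apply Rmult_lt_0_compat; [lra|apply pow_lt; lra]).
    rewrite sqrt_square by lra.
    rewrite sqrt_mult_alt by lra.
    replace (INR n ^ 3) with (INR n ^ 2 * INR n) by ring.
    rewrite sqrt_mult_alt by (apply pow_le; lra).
    rewrite sqrt_pow2 by lra.
    rewrite EK. unfold wt.
    unfold Rdiv. rewrite !Rmult_1_l, pow_inv, !Rinv_mult. ring.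
  - assert (LI : is_lim_seq (fun n => / A n) (Rbar_inv K)).
    { apply (is_lim_seq_inv A K LA). intro X. injection X. lra. }
    pose proof (is_lim_seq_scal_l _ K _ LI) as X. simpl in X.
    replace (K * / K) with 1 in X by (field; lra). exact X.
Qed.
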